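(* Let the numbers $a,k,n,s$ satisfy $k\geq 2$, $s\geq 1$ and $n-s\geq 4k^3+4|a|(k-1)$. Let the real sequence $x_0,\ldots,x_s$ satisfy \[ x_0\geq \frac{k-1}{2}+\sqrt{kn-a} \] and \[ x_{i+1}\geq x_i\left(1-\frac{1}{x_i^2/(k-1)+n-i-k}\right)\quad\text{for } 0\leq i<s. \] Then for every $i=1,\ldots,s$, \[ x_i\geq\frac{k-1}{2}+\sqrt{k(n-i)-a+1/2}. \] *)

(* Defs.v *)
From Stdlib Require Import Reals Lra Lia.

(* Main.v *)
Require Import Defs.
From Stdlib Require Import Reals Lra Lia.
From Stdlib Require Import Psatz.
Open Scope R_scope.

Lemma P4 k : 2 <= k -> k/2 + 2*k^4 + k*(k-1/2)*(k-1)^2/4 - (k-1/2)*(k-1)/2 - (k-1/2)*k^2*(k-1) >= 0.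
Proof. intros. assert (0 <= k*(k-1/2)*(k-1)^2/4).
 { unfold Rdiv. apply Rmult_le_pos; [|lra]. apply Rmult_le_pos; [nra|]. nra. }
 assert (0 <= k^3) by (apply pow_le; lra). assert (k^4 >= k^2) by (replace (k^4) with (k^2*k^2) by ring; assert (k^2>=4) by nra; nra). lra. Qed.
Lemma Qlem k m a A d r : 2<=k -> 0<=d<=1/2 -> 0<=A -> a<=A -> -a<=A ->
  k*m >= k*(1+4*k^3+4*A*(k-1)) -> 0<=r -> r*r = k*m - a + d ->
  r*r/2 + k*(k-1)*r/2 + (k*(k-1/2)*(k-1)^2/4 + (k-1/2)*(k-1)*(a-d) - (k-1/2)*k^2*(k-1)) >= 0.
Proof. intros Hk Hd HA0 HA1 HA2 Hkm Hr Hr2.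
  assert (P1 : 0 <= ((k-1/2)*(k-1))*((a-d) + (A+1/2))) by (apply Rmult_le_pos; nra).
  assert (P2 : 0 <= (k*(k-1))*r) by (apply Rmult_le_pos; nra).
  assert (P3 : 0 <= A*((k-1)*(k+1/2) - 1/2)) by (apply Rmult_le_pos; nra).
  pose proof (P4 k Hk). rewrite Hr2. lra. Qed.

Lemma step (k m a d x y : R) : 2 <= k -> 0 <= d <= 1/2 ->
  m - 1 >= 4*k^3 + 4*Rabs a*(k-1) ->
  x >= (k-1)/2 + sqrt(k*m - a + d) ->
  y >= x*(1 - 1/(x^2/(k-1) + m - k)) ->
  y >= (k-1)/2 + sqrt(k*(m-1) - a + 1/2).
Proof.
  intros Hk Hd Hm Hx Hy.
  set (A := Rabs a) in *.
  assert (HA0 : 0 <= A) by (unfold A; apply Rabs_pos).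
  assert (HA1 : a <= A) by (unfold A; apply RRle_abs).
  assert (HA2 : - a <= A) by (unfold A; rewrite <- Rabs_Ropp; apply RRle_abs).
  assert (Hk3 : k^3 >= k) by (clear -Hk; replace (k^3) with (k*(k*k)) by ring; nra).
  assert (HAk : A*(k-1) >= A) by (clear -Hk HA0; nra).
  assert (Hm1 : m >= 1 + k + 4*A) by (clear -Hm Hk3 HAk Hk; lra).
  assert (Hkm : k*m >= k*(1 + 4*k^3 + 4*A*(k-1))) by (apply Rle_ge, Rmult_le_compat_l; lra).
  assert (Hkm2 : k*m >= m) by (clear -Hk Hm1 HA0; nra).
  assert (Hpos : 0 <= k*m - a + d) by lra.
  assert (Hpos' : 0 <= k*(m-1) - a + 1/2) by lra.
  set (r := sqrt (k*m - a + d)) in *.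
  set (r' := sqrt (k*(m-1) - a + 1/2)).
  assert (Hr0 : 0 <= r) by apply sqrt_pos.
  assert (Hr'0 : 0 <= r') by apply sqrt_pos.
  assert (Hr2 : r*r = k*m - a + d) by (apply sqrt_sqrt; lra).
  assert (Hr'2 : r'*r' = k*(m-1) - a + 1/2) by (apply sqrt_sqrt; lra).
  assert (Hrr : r' <= r) by (clear -Hr0 Hr'0 Hr2 Hr'2 Hk Hd; nra).
  set (c := (k-1)/2) in *.
  set (X := c + r) in *.
  set (B := (k-1)*(m-k)).
  assert (Hc : c >= 1/2) by (unfold c; lra).
  assert (HX : X > 0) by (unfold X; lra).
  assert (Hmk : m - k > 0) by lra.
  assert (HB : B > 0) by (unfold B; apply Rmult_lt_0_compat; lra).
  assert (Hx0 : x > 0) by lra.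
  assert (Hkk : k*k >= k) by (clear -Hk; nra).
  assert (HrB : r*r >= B) by (unfold B; rewrite Hr2; lra).
  assert (HXr : X*X >= r*r) by (unfold X; clear -Hc Hr0; nra).
  assert (HxX : x*X >= B) by (clear -Hx HX HXr HrB; unfold X in *; nra).
  assert (Hrpos : r > 0) by (clear -Hr0 HrB HB; nra).
  assert (Hphi : forall z, z > 0 -> z*(1 - 1/(z^2/(k-1) + m - k)) = z - (k-1)*z/(z^2+B)).
  { intros z Hz. assert (z^2 + B > 0) by (clear -Hz HB; nra).
    assert (z^2/(k-1) + m - k = (z^2+B)/(k-1)) by (unfold B; field; lra).
    rewrite H0. field. split; lra. }
  rewrite Hphi in Hy by lra.
  assert (HxB : x^2 + B > 0) by (clear -Hx0 HB; nra).
  assert (HXB : X^2 + B > 0) by (clear -HX HB; nra).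
  assert (Hmono : x - (k-1)*x/(x^2+B) >= X - (k-1)*X/(X^2+B)).
  { assert (Hd1 : (k-1)*X/(X^2+B) - (k-1)*x/(x^2+B)
        = (k-1)*(x-X)*(x*X-B)/((x^2+B)*(X^2+B))) by (field; split; lra).
    assert (0 <= (k-1)*(x-X)*(x*X-B)/((x^2+B)*(X^2+B))).
    { unfold Rdiv. apply Rmult_le_pos. apply Rmult_le_pos. apply Rmult_le_pos; lra. lra. apply Rlt_le, Rinv_0_lt_compat. apply Rmult_lt_0_compat; lra. }
    lra. }
  assert (HE0 : (k-1/2)*(X^2+B) - 2*(k-1)*r*X >= 0).
  { assert (Hid : k*((k-1/2)*(X^2+B) - 2*(k-1)*r*X) =
       r*r/2 + k*(k-1)*r/2 + (k*(k-1/2)*(k-1)^2/4 + (k-1/2)*(k-1)*(a-d) - (k-1/2)*k^2*(k-1))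
       + (k-1/2)*(k-1)*(k*m - a + d - r*r)).
   { unfold X, c, B. field. }
    pose proof (Qlem k m a A d r Hk Hd HA0 HA1 HA2 Hkm Hr0 Hr2) as Q.
    rewrite <- Hr2 in Hid.
    replace (r*r - r*r) with 0 in Hid by ring.
    rewrite Rmult_0_r, Rplus_0_r in Hid.
    assert (Hk0 : 0 < k) by lra.
    set (E := (k-1/2)*(X^2+B) - 2*(k-1)*r*X) in *.
    clearbody E. clear -Hid Q Hk0. nra. }
  assert (Hkey : (k-1)*X/(X^2+B) <= r - r').
  { apply (Rmult_le_reg_r (X^2+B)); [lra|].
    unfold Rdiv. rewrite Rmult_assoc, Rinv_l by lra. rewrite Rmult_1_r.
    assert (He : (r - r')*(r + r') = k - 1/2 + d).
    { replace ((r - r')*(r + r')) with (r*r - r'*r') by ring. lra. }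
    assert (H1 : (r-r')*(r+r') <= (r-r')*(2*r)) by (apply Rmult_le_compat_l; lra).
    assert (H2 : (r-r')*(r+r')*(X^2+B) <= (r-r')*(2*r)*(X^2+B)) by (apply Rmult_le_compat_r; lra).
    assert (H3 : (k-1/2)*(X^2+B) <= (k-1/2+d)*(X^2+B)) by (apply Rmult_le_compat_r; lra).
    rewrite He in H2.
    apply (Rmult_le_reg_l (2*r)); [lra|].
    assert (H4 : (r-r')*(2*r)*(X^2+B) = 2*r*((r-r')*(X^2+B))) by ring.
    assert (H5 : 2*(k-1)*r*X = 2*r*((k-1)*X)) by ring.
    lra. }
  unfold X in *. lra.
Qed.

Theorem lemma4 (a : R) (k n s : nat) (x : nat -> R)
  (hk : (2 <= k)%nat) (hs : (1 <= s)%nat)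
  (hn : INR n - INR s >= 4 * INR k ^ 3 + 4 * Rabs a * (INR k - 1))
  (h0 : x 0%nat >= (INR k - 1) / 2 + sqrt (INR k * INR n - a))
  (hrec : forall i : nat, (i < s)%nat ->
     x (S i) >= x i * (1 - 1 / (x i ^ 2 / (INR k - 1) + INR n - INR i - INR k))) :
  forall i : nat, (1 <= i <= s)%nat ->
    x i >= (INR k - 1) / 2 + sqrt (INR k * (INR n - INR i) - a + 1 / 2).
Proof.
  assert (Hk : 2 <= INR k) by (assert (H2 : INR 2 <= INR k) by (apply le_INR; lia); rewrite S_INR, S_INR, INR_0 in H2; lra).
  assert (St : forall i, (i < s)%nat -> forall d, 0 <= d <= 1/2 ->
     x i >= (INR k - 1) / 2 + sqrt (INR k * (INR n - INR i) - a + d) ->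
     x (S i) >= (INR k - 1) / 2 + sqrt (INR k * (INR n - INR (S i)) - a + 1 / 2)).
  { intros i Hi d Hd Hx.
    assert (HS : INR (S i) <= INR s) by (apply le_INR; lia).
    rewrite S_INR in HS |- *.
    replace (INR n - (INR i + 1)) with ((INR n - INR i) - 1) by ring.
    apply (step (INR k) (INR n - INR i) a d (x i)).
    + exact Hk.
    + exact Hd.
    + lra.
    + exact Hx.
    + specialize (hrec i Hi).
      replace (x i ^ 2 / (INR k - 1) + (INR n - INR i) - INR k)
        with (x i ^ 2 / (INR k - 1) + INR n - INR i - INR k) by ring.
      exact hrec. }
  intros i [Hi1 His].
  induction i as [|i IH]; [lia|].
  destruct i as [|i].
  - apply (St 0%nat ltac:(lia) 0); [lra|].
    replace (INR k * (INR n - INR 0) - a + 0) with (INR k * INR n - a) by (rewrite INR_0; ring).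
    exact h0.
  - apply (St (S i) ltac:(lia) (1/2)); [lra|].
    apply IH; lia.
Qed.
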